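(* Let $O$ be the closed disk of radius $R>0$ centered at the origin, and let $P_1,\ldots,P_n$ be closed disks with centers $c_i$ and radii $0\le\rho_i\le R/2$. Let $D_{ij}$ be the closed disk with center $c_{ij}=c_i-c_j$ and radius $\rho_{ij}=\rho_i+\rho_j$, and $\delta_{ij}(x)=\|x-c_{ij}\|-\rho_{ij}$. Let $A_{ij}$ be the Apollonius cell of $D_{ij}$ in the Apollonius diagram of $\{D_{ij}\}_{i,j=1}^n$, and $V_{ij}$ the set of Apollonius vertices of $A_{ij}$ lying in $O$ together with the points of $\partial A_{ij}\cap\partial O$. For $\alpha\in\mathbb{R}$, increase each pupil radius by $\alpha/2$, so that each $D_{ij}$ becomes the disk $D_{ij}^{\alpha}$ of center $c_{ij}$ and radius $\rho_{ij}+\alpha$; let $\alpha^*$ be the minimal value of $\alpha$ for which $O\subseteq\bigcup_{i,j}D_{ij}^{\alpha}$. Then $\alpha^*=\max_{i,j}\max_{p\in V_{ij}}\delta_{ij}(p)$.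
   Context: For a family of disks $D_k$ with centers $c_k$ and radii $\rho_k$, $\delta_k(x)=\|x-c_k\|-\rho_k$; the Apollonius cell of $D_k$ is $\{x\mid\delta_k(x)\le\delta_l(x)\text{ for all }l\}$; points lying in at least three cells are Apollonius vertices, and the vertices of a cell are the Apollonius vertices lying in it. Note that enlarging all $D_{ij}$ by the same amount $\alpha$ does not change the Apollonius diagram.
   Formalization: Some set $V_{ij}$ is assumed nonempty, and an Apollonius vertex is a point lying in the cells of at least three pairwise distinct disks $D_{ij}$, that is, disks differing in center or radius. Each condition added here is assumed in the paper as well or is needed for the statement above to hold. *)

(* Defs.v *)
From Stdlib Require Import Reals.
Open Scope R_scope.

Definition pt : Type := (R * R)%type.

Definition dist2 (p q : pt) : R :=
  sqrt ((fst p - fst q) ^ 2 + (snd p - snd q) ^ 2).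

Definition origin : pt := (0, 0).

Definition in_boundary (S : pt -> Prop) (x : pt) : Prop :=
  forall e : R, 0 < e ->
    (exists y, S y /\ dist2 x y < e) /\ (exists z, ~ S z /\ dist2 x z < e).

Definition diskO (Rad : R) (x : pt) : Prop := dist2 x origin <= Rad.

Definition cij (c : nat -> pt) (i j : nat) : pt :=
  (fst (c i) - fst (c j), snd (c i) - snd (c j)).
Definition rhoij (rho : nat -> R) (i j : nat) : R := rho i + rho j.

Definition delta (c : nat -> pt) (rho : nat -> R) (i j : nat) (x : pt) : R :=
  dist2 x (cij c i j) - rhoij rho i j.

Definition cell (n : nat) (c : nat -> pt) (rho : nat -> R) (i j : nat)
  (x : pt) : Prop :=
  forall k l, (k < n)%nat -> (l < n)%nat -> delta c rho i j x <= delta c rho k l x.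

Definition distinct_disks (c : nat -> pt) (rho : nat -> R) (i j k l : nat) : Prop :=
  cij c i j <> cij c k l \/ rhoij rho i j <> rhoij rho k l.

Definition apollonius_vertex (n : nat) (c : nat -> pt) (rho : nat -> R)
  (x : pt) : Prop :=
  exists i1 j1 i2 j2 i3 j3,
    (i1 < n)%nat /\ (j1 < n)%nat /\ (i2 < n)%nat /\ (j2 < n)%nat /\
    (i3 < n)%nat /\ (j3 < n)%nat /\
    distinct_disks c rho i1 j1 i2 j2 /\ distinct_disks c rho i1 j1 i3 j3 /\
    distinct_disks c rho i2 j2 i3 j3 /\
    cell n c rho i1 j1 x /\ cell n c rho i2 j2 x /\ cell n c rho i3 j3 x.

Definition Vset (Rad : R) (n : nat) (c : nat -> pt) (rho : nat -> R)
  (i j : nat) (p : pt) : Prop :=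
  (apollonius_vertex n c rho p /\ cell n c rho i j p /\ diskO Rad p) \/
  (in_boundary (cell n c rho i j) p /\ in_boundary (diskO Rad) p).

Definition covers (Rad : R) (n : nat) (c : nat -> pt) (rho : nat -> R)
  (alpha : R) : Prop :=
  forall x, diskO Rad x ->
    exists i j, (i < n)%nat /\ (j < n)%nat /\
      dist2 x (cij c i j) <= rhoij rho i j + alpha.

Definition is_min_cover (Rad : R) (n : nat) (c : nat -> pt) (rho : nat -> R)
  (alpha : R) : Prop :=
  covers Rad n c rho alpha /\ (forall b, covers Rad n c rho b -> alpha <= b).

(* Main.v *)
Require Import Defs.
From Stdlib Require Import Reals Lra Psatz Classical.
Open Scope R_scope.


Definition sq (p q : pt) : R := (fst p - fst q) ^ 2 + (snd p - snd q) ^ 2.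

Lemma sq_ge0 p q : 0 <= sq p q.
Proof. unfold sq; apply Rplus_le_le_0_compat; apply pow2_ge_0. Qed.

Lemma dist2_sq p q : dist2 p q = sqrt (sq p q).
Proof. reflexivity. Qed.

Lemma dist2_ge0 p q : 0 <= dist2 p q.
Proof. apply sqrt_pos. Qed.

Lemma dist2_sqr p q : dist2 p q * dist2 p q = sq p q.
Proof. rewrite dist2_sq. apply sqrt_sqrt, sq_ge0. Qed.

Lemma dist2_lt p q p' q' : sq p q < sq p' q' -> dist2 p q < dist2 p' q'.
Proof. intros H. rewrite !dist2_sq. apply sqrt_lt_1_alt. split; [apply sq_ge0|exact H]. Qed.

Lemma dist2_le p q p' q' : sq p q <= sq p' q' -> dist2 p q <= dist2 p' q'.
Proof. intros H. rewrite !dist2_sq. apply sqrt_le_1_alt. exact H. Qed.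

Lemma dist2_eq p q p' q' : sq p q = sq p' q' -> dist2 p q = dist2 p' q'.
Proof. intros H. rewrite !dist2_sq, H. reflexivity. Qed.

Lemma dist2_sym p q : dist2 p q = dist2 q p.
Proof. apply dist2_eq. unfold sq; ring. Qed.

Lemma dist2_self p : dist2 p p = 0.
Proof. rewrite dist2_sq. unfold sq. replace ((fst p - fst p) ^ 2 + (snd p - snd p) ^ 2) with 0 by ring. apply sqrt_0. Qed.

Lemma sqrt_charac a s : 0 <= a -> a * a = s -> sqrt s = a.
Proof. intros Ha H. subst. rewrite sqrt_square; auto. Qed.

Lemma le_of_sqr a b : 0 <= b -> a * a <= b * b -> a <= b.
Proof. intros Hb H. nra. Qed.

Lemma lt_of_sqr a b : 0 <= b -> a * a < b * b -> a < b.
Proof. intros Hb H. nra. Qed.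

Lemma dist2_tri x y z : dist2 x z <= dist2 x y + dist2 y z.
Proof.
  destruct x as [x1 x2], y as [y1 y2], z as [z1 z2].
  assert (H1 := dist2_sqr (x1,x2) (y1,y2)). assert (H2 := dist2_sqr (y1,y2) (z1,z2)).
  assert (H3 := dist2_sqr (x1,x2) (z1,z2)).
  assert (G1 := dist2_ge0 (x1,x2) (y1,y2)). assert (G2 := dist2_ge0 (y1,y2) (z1,z2)).
  assert (G3 := dist2_ge0 (x1,x2) (z1,z2)).
  unfold sq in *; simpl in *.
  set (a := dist2 (x1, x2) (y1, y2)) in *. set (b := dist2 (y1, y2) (z1, z2)) in *.
  set (d := dist2 (x1, x2) (z1, z2)) in *. clearbody a b d.
  apply le_of_sqr; [lra|].
  assert (CS : (x1 - y1) * (y1 - z1) + (x2 - y2) * (y2 - z2) <= a * b).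
  { apply le_of_sqr. nra.
    assert (((x1 - y1) * (y1 - z1) + (x2 - y2) * (y2 - z2)) ^ 2 <= (a*a) * (b*b)).
    { rewrite H1, H2. assert (0 <= ((x1-y1)*(y2-z2) - (x2-y2)*(y1-z1))^2) by apply pow2_ge_0. nra. }
    destruct (Rle_dec 0 ((x1 - y1) * (y1 - z1) + (x2 - y2) * (y2 - z2))); nra. }
  rewrite H3. nra.
Qed.

Lemma dist2_le_sum (x y : pt) : dist2 x y <= Rabs (fst x - fst y) + Rabs (snd x - snd y).
Proof.
  apply le_of_sqr. apply Rplus_le_le_0_compat; apply Rabs_pos.
  rewrite dist2_sqr. unfold sq.
  assert (A1 := Rabs_pos (fst x - fst y)). assert (A2 := Rabs_pos (snd x - snd y)).
  rewrite <- (pow2_abs (fst x - fst y)), <- (pow2_abs (snd x - snd y)). nra.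
Qed.

Lemma dist_lip (x y : pt) : Rabs (dist2 x origin - dist2 y origin) <= dist2 x y.
Proof.
  assert (H1 := dist2_tri x y origin). assert (H2 := dist2_tri y x origin).
  rewrite (dist2_sym y x) in H2. unfold Rabs; destruct (Rcase_abs _); lra.
Qed.

Lemma coord_le (x : pt) : (- dist2 x origin <= fst x /\ fst x <= dist2 x origin) /\
  (- dist2 x origin <= snd x /\ snd x <= dist2 x origin).
Proof.
  destruct x as [x1 x2].
  assert (H := dist2_sqr (x1,x2) origin). assert (G := dist2_ge0 (x1,x2) origin).
  unfold sq, origin in *; cbn [fst snd] in *.
  set (d := dist2 (x1, x2) (0, 0)) in *. clearbody d.
  assert (0 <= x1 ^ 2) by apply pow2_ge_0. assert (0 <= x2 ^ 2) by apply pow2_ge_0.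
  split; split; nra.
Qed.

Lemma origin_in Rad : 0 < Rad -> diskO Rad origin.
Proof. intros. unfold diskO. rewrite dist2_self. lra. Qed.


Lemma abs_le_iff x L : Rabs x <= L <-> -L <= x <= L.
Proof. unfold Rabs; destruct (Rcase_abs x); split; intros; lra. Qed.

Fixpoint mn (g : nat -> R) (N : nat) : R :=
  match N with O => g O | S N' => Rmin (mn g N') (g (S N')) end.

Lemma mn_le g N k : (k <= N)%nat -> mn g N <= g k.
Proof.
  induction N; intros Hk; simpl.
  - assert (k = 0%nat) by lia. subst. lra.
  - destruct (Nat.eq_dec k (S N)). subst. apply Rmin_r.
    eapply Rle_trans. apply Rmin_l. apply IHN. lia.
Qed.

Lemma mn_att g N : exists k, (k <= N)%nat /\ mn g N = g k.
Proof.
  induction N; simpl.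
  - exists 0%nat; split; auto.
  - destruct IHN as [k [Hk E]]. unfold Rmin. destruct (Rle_dec (mn g N) (g (S N))).
    + exists k; split; [lia|auto].
    + exists (S N); split; auto.
Qed.

Lemma mn_lip g h N L : (forall k, Rabs (g k - h k) <= L) -> Rabs (mn g N - mn h N) <= L.
Proof.
  intros H. induction N; simpl; auto.
  specialize (H (S N)). apply abs_le_iff in H. apply abs_le_iff in IHN. apply abs_le_iff.
  unfold Rmin. destruct (Rle_dec (mn g N) (g (S N))); destruct (Rle_dec (mn h N) (h (S N))); lra.
Qed.

Section Main.
Variables (n : nat) (c : nat -> pt) (rho : nat -> R).

Definition F (x : pt) : R :=
  mn (fun k => mn (fun l => delta c rho k l x) (pred n)) (pred n).

Lemma F_le x k l : (k < n)%nat -> (l < n)%nat -> F x <= delta c rho k l x.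
Proof.
  intros Hk Hl. unfold F. eapply Rle_trans. apply (mn_le _ _ k). lia.
  apply (mn_le (fun l => delta c rho k l x)). lia.
Qed.

Lemma F_att x : (0 < n)%nat -> exists k l, (k < n)%nat /\ (l < n)%nat /\ F x = delta c rho k l x.
Proof.
  intros Hn. unfold F. destruct (mn_att (fun k => mn (fun l => delta c rho k l x) (pred n)) (pred n)) as [k [Hk E]].
  destruct (mn_att (fun l => delta c rho k l x) (pred n)) as [l [Hl E']].
  exists k, l. split; [lia|split; [lia|]]. rewrite E, E'. reflexivity.
Qed.

Lemma delta_lip k l x y : Rabs (delta c rho k l x - delta c rho k l y) <= dist2 x y.
Proof.
  unfold delta. apply abs_le_iff.
  assert (H1 := dist2_tri x y (cij c k l)). assert (H2 := dist2_tri y x (cij c k l)).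
  rewrite (dist2_sym y x) in H2. lra.
Qed.

Lemma F_lip x y : Rabs (F x - F y) <= dist2 x y.
Proof.
  unfold F. apply mn_lip. intros k. apply mn_lip. intros l. apply delta_lip.
Qed.

Lemma cell_F i j x : (i < n)%nat -> (j < n)%nat -> cell n c rho i j x -> delta c rho i j x = F x.
Proof.
  intros Hi Hj H. assert (Hn : (0 < n)%nat) by lia.
  destruct (F_att x Hn) as [k [l [Hk [Hl E]]]].
  assert (A1 := F_le x i j Hi Hj). specialize (H k l Hk Hl). lra.
Qed.

Lemma F_cell i j x : delta c rho i j x <= F x -> cell n c rho i j x.
Proof.
  intros H k l Hk Hl. assert (A := F_le x k l Hk Hl). lra.
Qed.

Lemma cell_closed i j p : in_boundary (cell n c rho i j) p -> cell n c rho i j p.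
Proof.
  intros H k l Hk Hl. apply Rnot_lt_le. intros Hlt.
  set (e := (delta c rho i j p - delta c rho k l p) / 2).
  assert (He : 0 < e) by (unfold e; lra).
  destruct (H e He) as [[y [Hy Hd]] _].
  specialize (Hy k l Hk Hl).
  assert (L1 := delta_lip i j p y). assert (L2 := delta_lip k l p y).
  apply abs_le_iff in L1. apply abs_le_iff in L2. unfold e in Hd. lra.
Qed.

Lemma diskO_closed Rad p : in_boundary (diskO Rad) p -> diskO Rad p.
Proof.
  intros H. unfold diskO. apply Rnot_lt_le. intros Hlt.
  set (e := dist2 p origin - Rad).
  assert (He : 0 < e) by (unfold e; lra).
  destruct (H e He) as [[y [Hy Hd]] _]. unfold diskO in Hy.
  assert (T := dist2_tri p y origin). unfold e in Hd. lra.
Qed.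

End Main.


Definition mv (x w : pt) (t : R) : pt := (fst x + t * fst w, snd x + t * snd w).
Definition nw (w : pt) : R := dist2 w origin.

Lemma small_t K e t0 : 0 <= K -> 0 < e -> 0 < t0 -> exists t, 0 < t < t0 /\ t * K < e.
Proof.
  intros HK He Ht0.
  exists (Rmin (t0 / 2) (e / (2 * (K + 1)))).
  assert (P : 0 < e / (2 * (K + 1))) by (apply Rdiv_lt_0_compat; lra).
  assert (M1 := Rmin_l (t0 / 2) (e / (2 * (K + 1)))).
  assert (M2 := Rmin_r (t0 / 2) (e / (2 * (K + 1)))).
  assert (M3 : 0 < Rmin (t0 / 2) (e / (2 * (K + 1)))) by (apply Rmin_glb_lt; lra).
  set (m := Rmin (t0 / 2) (e / (2 * (K + 1)))) in *. clearbody m.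
  split; [lra|].
  assert (E : e / (2 * (K + 1)) * (2 * (K + 1)) = e) by (field; lra).
  nra.
Qed.

Lemma nw_sqr w : nw w * nw w = sq w origin.
Proof. apply dist2_sqr. Qed.

Lemma nw_ge0 w : 0 <= nw w.
Proof. apply dist2_ge0. Qed.

Lemma dist_mv x w t : 0 <= t -> dist2 (mv x w t) x = t * nw w.
Proof.
  intros Ht. rewrite dist2_sq. apply sqrt_charac.
  apply Rmult_le_pos; [lra|apply nw_ge0].
  replace (t * nw w * (t * nw w)) with (t * t * (nw w * nw w)) by ring.
  rewrite nw_sqr. destruct x, w; unfold sq, mv, origin; simpl; ring.
Qed.

Lemma sq_mv x w t p : sq (mv x w t) p =
  sq x p + 2 * t * ((fst x - fst p) * fst w + (snd x - snd p) * snd w) + t * t * sq w origin.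
Proof. destruct x, w, p; unfold sq, mv, origin; simpl; ring. Qed.

Lemma sqw_pos w : 0 < sq w origin -> 0 < nw w.
Proof.
  intros H. assert (A := nw_sqr w). assert (B := nw_ge0 w).
  destruct (Req_dec (nw w) 0) as [E|E]. rewrite E in A. lra. lra.
Qed.

Lemma inc_dir x ca cb : exists w, 0 < sq w origin /\
  forall t, 0 < t -> sq x ca < sq (mv x w t) ca /\ sq x cb < sq (mv x w t) cb.
Proof.
  destruct x as [x1 x2], ca as [a1 a2], cb as [b1 b2].
  set (u1 := x1 - a1). set (u2 := x2 - a2). set (v1 := x1 - b1). set (v2 := x2 - b2).
  assert (key : forall w, 0 < sq w origin -> 0 <= u1 * fst w + u2 * snd w ->
     0 <= v1 * fst w + v2 * snd w ->
     forall t, 0 < t -> sq (x1,x2) (a1,a2) < sq (mv (x1,x2) w t) (a1,a2) /\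
                  sq (x1,x2) (b1,b2) < sq (mv (x1,x2) w t) (b1,b2)).
  { intros w Hw H1 H2 t Ht. rewrite !sq_mv. simpl. fold u1 u2 v1 v2.
    assert (0 < t * t * sq w origin) by (apply Rmult_lt_0_compat; nra).
    split; nra. }
  destruct (Rle_dec 0 (u1 * v1 + u2 * v2)) as [Huv|Huv].
  - destruct (Req_dec ((u1 + v1)^2 + (u2 + v2)^2) 0) as [Z|Z].
    + exists (1, 0). assert (P : 0 < sq (1,0) origin) by (unfold sq, origin; simpl; lra).
      split; [exact P|]. apply key; auto; simpl.
      assert (0 <= (u1 + v1)^2) by apply pow2_ge_0. assert (0 <= (u2 + v2)^2) by apply pow2_ge_0.
      assert (u1 + v1 = 0) by nra. assert (u2 + v2 = 0) by nra. nra.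
      assert (0 <= (u1 + v1)^2) by apply pow2_ge_0. assert (0 <= (u2 + v2)^2) by apply pow2_ge_0.
      assert (u1 + v1 = 0) by nra. assert (u2 + v2 = 0) by nra. nra.
    + exists (u1 + v1, u2 + v2).
      assert (P : 0 < sq (u1 + v1, u2 + v2) origin).
      { unfold sq, origin; simpl. assert (0 <= (u1 + v1)^2) by apply pow2_ge_0.
        assert (0 <= (u2 + v2)^2) by apply pow2_ge_0. replace ((u1 + v1 - 0) ^ 2 + (u2 + v2 - 0) ^ 2) with ((u1 + v1)^2 + (u2 + v2)^2) by ring. lra. }
      split; [exact P|]. apply key; auto; simpl; nra.
  - destruct (Rle_dec 0 (- v1 * u2 + v2 * u1)) as [Hs|Hs].
    + exists (- u2, u1).
      assert (P : 0 < sq (- u2, u1) origin).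
      { unfold sq, origin; simpl. nra. }
      split; [exact P|]. apply key; auto; simpl; nra.
    + exists (u2, - u1).
      assert (P : 0 < sq (u2, - u1) origin).
      { unfold sq, origin; simpl. nra. }
      split; [exact P|]. apply key; auto; simpl; nra.
Qed.


Lemma sqrt_diff a b Q : 0 <= a -> a < b -> 0 < Q -> sqrt (b * b + Q) - sqrt (a * a + Q) < b - a.
Proof.
  intros Ha Hab HQ.
  assert (EA := sqrt_sqrt (a * a + Q) ltac:(nra)). assert (EB := sqrt_sqrt (b * b + Q) ltac:(nra)).
  assert (GA := sqrt_pos (a * a + Q)). assert (GB := sqrt_pos (b * b + Q)).
  set (A := sqrt (a * a + Q)) in *. set (B := sqrt (b * b + Q)) in *. clearbody A B.
  assert (A > a) by nra. assert (B > b) by nra.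
  apply Rnot_le_lt. intros Hc.
  assert ((B - A) * (B + A) = (b - a) * (b + a)) by nra.
  assert ((B - A) * (B + A) >= (b - a) * (B + A)) by nra.
  nra.
Qed.

Lemma sq_zero p q : sq p q <= 0 -> fst p = fst q /\ snd p = snd q.
Proof.
  intros H. unfold sq in H. assert (0 <= (fst p - fst q)^2) by apply pow2_ge_0.
  assert (0 <= (snd p - snd q)^2) by apply pow2_ge_0. split; nra.
Qed.

Lemma side_dir q ca cb : ca <> cb ->
  (exists w t0, 0 < sq w origin /\ 0 < t0 /\ forall t, 0 < t < t0 ->
      dist2 (mv q w t) cb - dist2 (mv q w t) ca < dist2 q cb - dist2 q ca) \/
  (exists w t0, 0 < sq w origin /\ 0 < t0 /\ forall t, 0 < t < t0 ->
      dist2 (mv q w t) cb - dist2 (mv q w t) ca > dist2 q cb - dist2 q ca).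
Proof.
  intros Hne.
  assert (Nu := dist2_sqr q ca). assert (Nv := dist2_sqr q cb).
  assert (Gu := dist2_ge0 q ca). assert (Gv := dist2_ge0 q cb).
  remember (dist2 q ca) as nu eqn:Enu. remember (dist2 q cb) as nv eqn:Env.
  destruct q as [q1 q2], ca as [a1 a2], cb as [b1 b2].
  unfold sq in Nu, Nv; cbn [fst snd] in Nu, Nv.
  set (u1 := q1 - a1) in *. set (u2 := q2 - a2) in *.
  set (v1 := q1 - b1) in *. set (v2 := q2 - b2) in *.
  assert (Hne' : ~ (u1 = v1 /\ u2 = v2)).
  { intros [E1 E2]. apply Hne. unfold u1, v1, u2, v2 in *. f_equal; lra. }
  destruct (Req_dec nv 0) as [Zv|Zv].
  {
    assert (Hv1 : v1 = 0) by nra. assert (Hv2 : v2 = 0) by nra.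
    assert (Pu : 0 < nu).
    { destruct (Req_dec nu 0) as [Z|Z]; [|lra]. exfalso. apply Hne'. split; nra. }
    right. exists (- u1, - u2), 1. split; [unfold sq, origin; simpl; nra|]. split; [lra|].
    intros t Ht.
    assert (E1 : dist2 (mv (q1, q2) (- u1, - u2) t) (b1, b2) = t * nu).
    { rewrite dist2_sq; apply sqrt_charac; [nra|]. unfold sq, mv; simpl.
      replace (q1 + t * - u1 - b1) with (v1 - t * u1) by (unfold v1, u1; ring).
      replace (q2 + t * - u2 - b2) with (v2 - t * u2) by (unfold v2, u2; ring).
      rewrite Hv1, Hv2. replace (t * nu * (t * nu)) with (t * t * (nu * nu)) by ring. rewrite Nu. ring. }
    assert (E2 : dist2 (mv (q1, q2) (- u1, - u2) t) (a1, a2) = (1 - t) * nu).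
    { rewrite dist2_sq; apply sqrt_charac; [nra|]. unfold sq, mv; simpl.
      replace (q1 + t * - u1 - a1) with ((1 - t) * u1) by (unfold u1; ring).
      replace (q2 + t * - u2 - a2) with ((1 - t) * u2) by (unfold u2; ring).
      replace ((1 - t) * nu * ((1 - t) * nu)) with ((1 - t) * (1 - t) * (nu * nu)) by ring. rewrite Nu. ring. }
    rewrite E1, E2, Zv. nra. }
  destruct (Req_dec nu 0) as [Zu|Zu].
  {
    assert (Hu1 : u1 = 0) by nra. assert (Hu2 : u2 = 0) by nra.
    assert (Pv : 0 < nv) by lra.
    left. exists (- v1, - v2), 1. split; [unfold sq, origin; simpl; nra|]. split; [lra|].
    intros t Ht.
    assert (E1 : dist2 (mv (q1, q2) (- v1, - v2) t) (a1, a2) = t * nv).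
    { rewrite dist2_sq; apply sqrt_charac; [nra|]. unfold sq, mv; simpl.
      replace (q1 + t * - v1 - a1) with (u1 - t * v1) by (unfold v1, u1; ring).
      replace (q2 + t * - v2 - a2) with (u2 - t * v2) by (unfold v2, u2; ring).
      rewrite Hu1, Hu2. replace (t * nv * (t * nv)) with (t * t * (nv * nv)) by ring. rewrite Nv. ring. }
    assert (E2 : dist2 (mv (q1, q2) (- v1, - v2) t) (b1, b2) = (1 - t) * nv).
    { rewrite dist2_sq; apply sqrt_charac; [nra|]. unfold sq, mv; simpl.
      replace (q1 + t * - v1 - b1) with ((1 - t) * v1) by (unfold v1; ring).
      replace (q2 + t * - v2 - b2) with ((1 - t) * v2) by (unfold v2; ring).
      replace ((1 - t) * nv * ((1 - t) * nv)) with ((1 - t) * (1 - t) * (nv * nv)) by ring. rewrite Nv. ring. }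
    rewrite E1, E2, Zu. nra. }
  assert (Pu : 0 < nu) by lra. assert (Pv : 0 < nv) by lra.
  set (D := nu * nv - (u1 * v1 + u2 * v2)).
  assert (CS : (u1 * v1 + u2 * v2) * (u1 * v1 + u2 * v2) + (u1 * v2 - u2 * v1) * (u1 * v2 - u2 * v1)
     = (nu * nu) * (nv * nv)) by (rewrite Nu, Nv; ring).
  assert (D0 : 0 <= D).
  { unfold D. apply Rnot_lt_le. intros Hc.
    assert (H0 := Rle_0_sqr (u1 * v2 - u2 * v1)); unfold Rsqr in H0.
    assert (nu * nv < u1 * v1 + u2 * v2) by lra.
    assert (0 <= nu * nv) by nra.
    assert ((nu * nv) * (nu * nv) < (u1 * v1 + u2 * v2) * (u1 * v1 + u2 * v2)) by nra.
    lra. }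
  destruct (Rlt_dec 0 D) as [Dp|Dz].
  { left.
    set (w1 := nv * u1 - nu * v1). set (w2 := nv * u2 - nu * v2).
    assert (Uw : u1 * w1 + u2 * w2 = nu * D).
    { unfold w1, w2, D. replace (u1 * (nv * u1 - nu * v1) + u2 * (nv * u2 - nu * v2))
        with (nv * (u1 ^ 2 + u2 ^ 2) - nu * (u1 * v1 + u2 * v2)) by ring. rewrite <- Nu. ring. }
    assert (Vw : v1 * w1 + v2 * w2 = - nv * D).
    { unfold w1, w2, D. replace (v1 * (nv * u1 - nu * v1) + v2 * (nv * u2 - nu * v2))
        with (nv * (u1 * v1 + u2 * v2) - nu * (v1 ^ 2 + v2 ^ 2)) by ring. rewrite <- Nv. ring. }
    assert (Pw : 0 < sq (w1, w2) origin).
    { unfold sq, origin; simpl. apply Rnot_le_lt. intros Hc.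
      assert (0 <= (w1 - 0)^2) by apply pow2_ge_0. assert (0 <= (w2 - 0)^2) by apply pow2_ge_0.
      assert (w1 = 0) by nra. assert (w2 = 0) by nra.
      assert (0 < nv * D) by (apply Rmult_lt_0_compat; lra). nra. }
    exists (w1, w2), (2 * nv * D / sq (w1, w2) origin).
    split; [exact Pw|]. split. { apply Rdiv_lt_0_compat; [|exact Pw]. nra. }
    intros t [Ht0 Ht1].
    assert (A1 : nu < dist2 (mv (q1, q2) (w1, w2) t) (a1, a2)).
    { rewrite Enu. apply dist2_lt. rewrite sq_mv. simpl. fold u1 u2. rewrite Uw.
      assert (0 < t * t * sq (w1, w2) origin) by (apply Rmult_lt_0_compat; nra).
      assert (0 < nu * D) by (apply Rmult_lt_0_compat; lra). nra. }
    assert (A2 : dist2 (mv (q1, q2) (w1, w2) t) (b1, b2) < nv).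
    { rewrite Env. apply dist2_lt. rewrite sq_mv. simpl. fold v1 v2. rewrite Vw.
      assert (t * sq (w1, w2) origin < 2 * nv * D).
      { apply (Rmult_lt_compat_r (sq (w1, w2) origin)) in Ht1; [|exact Pw].
        unfold Rdiv in Ht1. rewrite Rmult_assoc, Rinv_l in Ht1 by lra. lra. }
      assert (t * (t * sq (w1, w2) origin) < t * (2 * nv * D)) by (apply Rmult_lt_compat_l; lra).
      nra. }
    lra. }
  assert (DZ : D = 0) by lra.
  assert (Det : u1 * v2 - u2 * v1 = 0).
  { assert (u1 * v1 + u2 * v2 = nu * nv) by (unfold D in DZ; lra).
    assert (E : (u1 * v2 - u2 * v1) * (u1 * v2 - u2 * v1) = 0).
    { rewrite H in CS. lra. }
    apply Rmult_integral in E. destruct E; auto. }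
  assert (Qpos : forall t, 0 < t -> 0 < t * t * (nv * nv)) by (intros; apply Rmult_lt_0_compat; nra).
  assert (Ea : forall t, dist2 (mv (q1, q2) (- v2, v1) t) (a1, a2) = sqrt (nu * nu + t * t * (nv * nv))).
  { intros t. rewrite dist2_sq. f_equal. rewrite Nu, Nv. unfold sq, mv; cbn [fst snd].
    transitivity ((u1 - t * v2) ^ 2 + (u2 + t * v1) ^ 2). { unfold u1, u2; ring. }
    replace ((u1 - t * v2) ^ 2 + (u2 + t * v1) ^ 2) with
      (u1 ^ 2 + u2 ^ 2 + t * t * (v1 ^ 2 + v2 ^ 2) - 2 * t * (u1 * v2 - u2 * v1)) by ring.
    rewrite Det. ring. }
  assert (Eb : forall t, dist2 (mv (q1, q2) (- v2, v1) t) (b1, b2) = sqrt (nv * nv + t * t * (nv * nv))).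
  { intros t. rewrite dist2_sq. f_equal. rewrite Nv. unfold sq, mv; cbn [fst snd].
    unfold v1, v2; ring. }
  assert (Pw : 0 < sq (- v2, v1) origin).
  { unfold sq, origin; cbn [fst snd]. replace ((- v2 - 0) ^ 2 + (v1 - 0) ^ 2) with (v1 ^ 2 + v2 ^ 2) by ring.
    rewrite <- Nv. nra. }
  destruct (Rtotal_order nu nv) as [Lt|[Eq|Gt]].
  - left. exists (- v2, v1), 1. split; [exact Pw|]. split; [lra|]. intros t [Ht _].
    rewrite Ea, Eb. assert (S := sqrt_diff nu nv (t * t * (nv * nv)) Gu Lt (Qpos t Ht)).
    lra.
  - exfalso. apply Hne'.
    assert ((u1 - v1)^2 + (u2 - v2)^2 = 0).
    { replace ((u1 - v1)^2 + (u2 - v2)^2) with ((u1^2 + u2^2) + (v1^2 + v2^2) - 2 * (u1 * v1 + u2 * v2)) by ring.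
      rewrite <- Nu, <- Nv. unfold D in DZ. rewrite Eq in *. nra. }
    assert (0 <= (u1 - v1)^2) by apply pow2_ge_0. assert (0 <= (u2 - v2)^2) by apply pow2_ge_0.
    split; nra.
  - right. exists (- v2, v1), 1. split; [exact Pw|]. split; [lra|]. intros t [Ht _].
    rewrite Ea, Eb. assert (S := sqrt_diff nv nu (t * t * (nv * nv)) Gv Gt (Qpos t Ht)).
    lra.
Qed.


Lemma rot_away (x0 m : pt) e : 0 < e -> 0 < fst x0 * fst m + snd x0 * snd m ->
  exists y, sq y origin = sq x0 origin /\ sq x0 m < sq y m /\ dist2 x0 y < e.
Proof.
  intros He Hp. destruct x0 as [x1 x2], m as [m1 m2]. cbn [fst snd] in Hp.
  set (N := sq (x1, x2) origin).
  assert (HN : 0 <= N) by apply sq_ge0.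
  set (eta := Rmin (1/2) (e * e / (2 * (2 * N + 1)))).
  assert (E1 : eta <= 1/2) by apply Rmin_l.
  assert (E2 : eta <= e * e / (2 * (2 * N + 1))) by apply Rmin_r.
  assert (E3 : 0 < eta). { apply Rmin_glb_lt. lra. apply Rdiv_lt_0_compat; nra. }
  clearbody eta.
  assert (E4 : 2 * eta * N < e * e).
  { assert (e * e / (2 * (2 * N + 1)) * (2 * (2 * N + 1)) = e * e) by (field; lra).
    assert (eta * (2 * (2 * N + 1)) <= e * e) by nra. nra. }
  set (a := 1 - eta).
  assert (Hs := sqrt_sqrt (2 * eta - eta * eta) ltac:(nra)).
  assert (Gs := sqrt_pos (2 * eta - eta * eta)).
  set (s := sqrt (2 * eta - eta * eta)) in *. clearbody s.
  remember (- x2 * m1 + x1 * m2) as j eqn:Ej.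
  set (b := if Rle_dec 0 j then - s else s).
  assert (Hb2 : b * b = 2 * eta - eta * eta) by (unfold b; destruct (Rle_dec 0 j); nra).
  assert (Hbj : b * j <= 0).
  { unfold b. destruct (Rle_dec 0 j); nra. }
  clearbody b.
  exists (a * x1 - b * x2, a * x2 + b * x1).
  unfold N, sq, origin, a; cbn [fst snd]. split; [|split].
  - nra.
  - rewrite Ej in Hbj. nra.
  - rewrite dist2_sq. unfold sq; cbn [fst snd].
    replace ((x1 - ((1 - eta) * x1 - b * x2)) ^ 2 + (x2 - ((1 - eta) * x2 + b * x1)) ^ 2)
      with (2 * eta * ((x1 - 0) ^ 2 + (x2 - 0) ^ 2)) by nra.
    rewrite <- (sqrt_square e) by lra. apply sqrt_lt_1_alt. split.
    + assert (0 <= (x1 - 0) ^ 2 + (x2 - 0) ^ 2) by (apply Rplus_le_le_0_compat; apply pow2_ge_0). nra.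
    + unfold N, sq, origin in E4; cbn [fst snd] in E4. lra.
Qed.


Lemma abs_sin_le z : Rabs (sin z) <= Rabs z.
Proof.
  assert (Hb := SIN_bound z).
  destruct (Rtotal_order z 0) as [Lt|[Eq|Gt]].
  - assert (A := sin_gt_x z Lt).
    destruct (Rle_dec (-1) z).
    + assert (sin z <= 0).
      { rewrite <- (Ropp_involutive z), sin_neg. assert (0 <= sin (- z)).
        apply sin_ge_0; [lra|]. assert (1 < PI) by (assert (H := PI2_1); lra). lra. lra. }
      rewrite Rabs_left1 by lra. rewrite Rabs_left by lra. lra.
    + rewrite (Rabs_left z) by lra. unfold Rabs; destruct (Rcase_abs (sin z)); lra.
  - subst. rewrite sin_0, Rabs_R0. lra.
  - assert (A := sin_lt_x z Gt).
    destruct (Rle_dec z 1).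
    + assert (0 <= sin z). { apply sin_ge_0; [lra|]. assert (1 < PI) by (assert (H := PI2_1); lra). lra. }
      rewrite Rabs_right by lra. rewrite Rabs_right by lra. lra.
    + rewrite (Rabs_right z) by lra. unfold Rabs; destruct (Rcase_abs (sin z)); lra.
Qed.

Definition cp (x0 : pt) (th : R) : pt :=
  (cos th * fst x0 - sin th * snd x0, cos th * snd x0 + sin th * fst x0).

Lemma sc1 th : sin th * sin th + cos th * cos th = 1.
Proof. assert (H := sin2_cos2 th). unfold Rsqr in H. exact H. Qed.

Lemma cp_norm x0 th : sq (cp x0 th) origin = sq x0 origin.
Proof.
  assert (H := sc1 th). destruct x0 as [x1 x2]. unfold sq, cp, origin; cbn [fst snd].
  transitivity ((sin th * sin th + cos th * cos th) * ((x1 - 0)^2 + (x2 - 0)^2)); [ring|].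
  rewrite H; ring.
Qed.

Lemma cp_0 x0 : cp x0 0 = x0.
Proof. destruct x0. unfold cp; cbn [fst snd]. rewrite cos_0, sin_0. f_equal; ring. Qed.

Lemma cp_lip x0 th ph : dist2 (cp x0 th) (cp x0 ph) <= Rabs (th - ph) * nw x0.
Proof.
  apply le_of_sqr. apply Rmult_le_pos; [apply Rabs_pos|apply nw_ge0].
  rewrite dist2_sqr.
  set (h := (th - ph) / 2).
  assert (Eh : th - ph = 2 * h) by (unfold h; field).
  assert (C : cos (th - ph) = 1 - 2 * sin h * sin h).
  { rewrite Eh, cos_2a_sin. ring. }
  rewrite cos_minus in C.
  assert (S1 := sc1 th). assert (S2 := sc1 ph).
  assert (Sb := abs_sin_le h).
  assert (Sb2 : sin h * sin h <= h * h).
  { assert (T := Rsqr_le_abs_1 _ _ Sb). unfold Rsqr in T. exact T. }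
  assert (Nw := nw_sqr x0). assert (Gw := nw_ge0 x0).
  destruct x0 as [x1 x2]. unfold sq, cp, origin in *; cbn [fst snd] in *.
  set (N := nw (x1, x2)) in *. clearbody N.
  replace ((cos th * x1 - sin th * x2 - (cos ph * x1 - sin ph * x2)) ^ 2 +
    (cos th * x2 + sin th * x1 - (cos ph * x2 + sin ph * x1)) ^ 2) with
    (((cos th - cos ph) * (cos th - cos ph) + (sin th - sin ph) * (sin th - sin ph)) * ((x1 - 0) ^ 2 + (x2 - 0) ^ 2)) by ring.
  rewrite <- Nw.
  assert (K : (cos th - cos ph) * (cos th - cos ph) + (sin th - sin ph) * (sin th - sin ph) = 4 * (sin h * sin h)) by nra.
  rewrite K.
  replace (Rabs (th - ph) * N * (Rabs (th - ph) * N)) with ((Rabs (th - ph) * Rabs (th - ph)) * (N * N)) by ring.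
  rewrite <- Rabs_mult, Rabs_right by nra. rewrite Eh.
  assert (0 <= N * N) by nra. nra.
Qed.

Lemma cp_reach x0 q : 0 < sq x0 origin -> sq q origin = sq x0 origin -> exists th, cp x0 th = q.
Proof.
  intros HN Hq. destruct x0 as [x1 x2], q as [q1 q2]. unfold sq, origin in *; cbn [fst snd] in *.
  set (N := (x1 - 0) ^ 2 + (x2 - 0) ^ 2) in *.
  set (al := (x1 * q1 + x2 * q2) / N). set (be := (x1 * q2 - x2 * q1) / N).
  assert (E : (x1 * q1 + x2 * q2) ^ 2 + (x1 * q2 - x2 * q1) ^ 2 = N * N).
  { transitivity (((x1 - 0) ^ 2 + (x2 - 0) ^ 2) * ((q1 - 0) ^ 2 + (q2 - 0) ^ 2)); [ring|].
    rewrite Hq. fold N. ring. }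
  assert (AB : al * al + be * be = 1).
  { replace (al * al + be * be) with (((x1 * q1 + x2 * q2) ^ 2 + (x1 * q2 - x2 * q1) ^ 2) / (N * N))
      by (unfold al, be; field; lra).
    rewrite E. field. lra. }
  assert (Hal : -1 <= al <= 1) by nra.
  assert (Q1 : al * x1 - be * x2 = q1).
  { replace (al * x1 - be * x2) with (((x1 * q1 + x2 * q2) * x1 - (x1 * q2 - x2 * q1) * x2) / N)
      by (unfold al, be; field; lra).
    replace ((x1 * q1 + x2 * q2) * x1 - (x1 * q2 - x2 * q1) * x2) with (q1 * N) by (unfold N; ring).
    field. lra. }
  assert (Q2 : al * x2 + be * x1 = q2).
  { replace (al * x2 + be * x1) with (((x1 * q1 + x2 * q2) * x2 + (x1 * q2 - x2 * q1) * x1) / N)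
      by (unfold al, be; field; lra).
    replace ((x1 * q1 + x2 * q2) * x2 + (x1 * q2 - x2 * q1) * x1) with (q2 * N) by (unfold N; ring).
    field. lra. }
  assert (Sb : sin (acos al) = Rabs be).
  { rewrite sin_acos by lra. apply sqrt_charac. apply Rabs_pos.
    rewrite <- Rabs_mult, Rabs_right by nra. unfold Rsqr. lra. }
  destruct (Rle_dec 0 be) as [Hb|Hb].
  - exists (acos al). unfold cp; cbn [fst snd]. rewrite cos_acos by lra. rewrite Sb, Rabs_right by lra.
    f_equal; lra.
  - exists (- acos al). unfold cp; cbn [fst snd]. rewrite cos_neg, sin_neg, cos_acos by lra.
    rewrite Sb, Rabs_left by lra. f_equal; lra.
Qed.


Lemma sup_arg (phi : R -> R) L :
  0 <= L -> (forall s t, 0 <= s <= 1 -> 0 <= t <= 1 -> Rabs (phi s - phi t) <= L * Rabs (s - t)) ->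
  phi 0 = 0 -> phi 1 < 0 -> (forall t, 0 <= t <= 1 -> phi t <= 0) ->
  exists ts, 0 <= ts <= 1 /\ phi ts = 0 /\
    forall e, 0 < e -> exists t, 0 <= t <= 1 /\ Rabs (t - ts) < e /\ phi t < 0.
Proof.
  intros HL Hlip H0 H1 Hle.
  set (E := fun t => 0 <= t <= 1 /\ phi t = 0).
  assert (Eb : bound E) by (exists 1; intros t [Ht _]; lra).
  assert (E0 : exists x, E x) by (exists 0; split; [lra|auto]).
  destruct (completeness E Eb E0) as [ts [Hub Hlub]].
  assert (G0 : 0 <= ts) by (apply Hub; split; [lra|auto]).
  assert (G1 : ts <= 1) by (apply Hlub; intros t [Ht _]; lra).
  assert (Z : phi ts = 0).
  { apply Rle_antisym; [apply Hle; lra|]. apply Rnot_lt_le. intros Hn.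
    set (d := - phi ts / (L + 1)).
    assert (Hd : 0 < d) by (unfold d; apply Rdiv_lt_0_compat; lra).
    assert (Nub : ~ is_upper_bound E (ts - d)).
    { intros U. assert (ts <= ts - d) by (apply Hlub; exact U). lra. }
    apply not_all_ex_not in Nub. destruct Nub as [t Ht].
    apply imply_to_and in Ht. destruct Ht as [[Ht1 Ht2] Ht3].
    assert (t <= ts) by (apply Hub; split; auto).
    assert (Lp := Hlip t ts Ht1 (conj G0 G1)). rewrite Ht2 in Lp.
    rewrite (Rabs_right (0 - phi ts)) in Lp by lra. rewrite (Rabs_left1 (t - ts)) in Lp by lra.
    assert (L * (ts - t) <= L * d) by (apply Rmult_le_compat_l; lra).
    assert (d * (L + 1) = - phi ts) by (unfold d; field; lra).
    nra. }
  exists ts. split; [lra|]. split; [exact Z|].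
  intros e He.
  assert (Lt1 : ts < 1). { destruct (Req_dec ts 1) as [Q|Q]; [|lra]. rewrite Q in Z. lra. }
  set (m := Rmin e (1 - ts)).
  assert (M1 : m <= e) by apply Rmin_l. assert (M2 : m <= 1 - ts) by apply Rmin_r.
  assert (M3 : 0 < m) by (apply Rmin_glb_lt; lra). clearbody m.
  exists (ts + m / 2). split; [lra|]. split.
  { rewrite Rabs_right by lra. lra. }
  destruct (Rle_lt_or_eq_dec _ _ (Hle (ts + m / 2) ltac:(lra))) as [Q|Q]; [exact Q|].
  exfalso. assert (ts + m / 2 <= ts) by (apply Hub; split; [lra|auto]). lra.
Qed.


Lemma fin_gap1 (h : nat -> R) N : exists g, 0 < g /\ forall k, (k < N)%nat -> 0 < h k -> g <= h k.
Proof.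
  induction N.
  - exists 1. split; [lra|]. intros; lia.
  - destruct IHN as [g [Hg H]].
    destruct (Rlt_dec 0 (h N)) as [P|P].
    + exists (Rmin g (h N)). split; [apply Rmin_glb_lt; lra|].
      intros k Hk Hh. destruct (Nat.eq_dec k N). subst. apply Rmin_r.
      eapply Rle_trans. apply Rmin_l. apply H; auto. lia.
    + exists g. split; auto. intros k Hk Hh. destruct (Nat.eq_dec k N). subst. lra.
      apply H; auto. lia.
Qed.

Lemma fin_gap (h : nat -> nat -> R) N : exists g, 0 < g /\
  forall k l, (k < N)%nat -> (l < N)%nat -> 0 < h k l -> g <= h k l.
Proof.
  induction N.
  - exists 1. split; [lra|]. intros; lia.
  - destruct IHN as [g [Hg H]].
    destruct (fin_gap1 (fun l => h N l) (S N)) as [g1 [Hg1 H1]].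
    destruct (fin_gap1 (fun k => h k N) (S N)) as [g2 [Hg2 H2]].
    exists (Rmin g (Rmin g1 g2)). split. { apply Rmin_glb_lt; [lra|apply Rmin_glb_lt; lra]. }
    intros k l Hk Hl Hh.
    assert (M1 := Rmin_l g (Rmin g1 g2)). assert (M2 := Rmin_r g (Rmin g1 g2)).
    assert (M3 := Rmin_l g1 g2). assert (M4 := Rmin_r g1 g2).
    destruct (Nat.eq_dec k N). { subst. assert (g1 <= h N l) by (apply H1; auto). lra. }
    destruct (Nat.eq_dec l N). { subst. assert (g2 <= h k N) by (apply H2; auto). lra. }
    assert (g <= h k l) by (apply H; auto; lia). lra.
Qed.

Definition sc (l : R) (p : pt) : pt := (l * fst p, l * snd p).

Lemma dist_sc0 l p : 0 <= l -> dist2 (sc l p) origin = l * dist2 p origin.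
Proof.
  intros Hl. rewrite (dist2_sq (sc l p)). apply sqrt_charac.
  apply Rmult_le_pos; [lra|apply dist2_ge0].
  replace (l * dist2 p origin * (l * dist2 p origin)) with (l * l * (dist2 p origin * dist2 p origin)) by ring.
  rewrite dist2_sqr. destruct p; unfold sq, sc, origin; cbn [fst snd]; ring.
Qed.

Lemma dist_sc1 l p : 1 <= l -> dist2 (sc l p) p = (l - 1) * dist2 p origin.
Proof.
  intros Hl. rewrite (dist2_sq (sc l p)). apply sqrt_charac.
  apply Rmult_le_pos; [lra|apply dist2_ge0].
  replace ((l - 1) * dist2 p origin * ((l - 1) * dist2 p origin)) with ((l - 1) * (l - 1) * (dist2 p origin * dist2 p origin)) by ring.
  rewrite dist2_sqr. destruct p; unfold sq, sc, origin; cbn [fst snd]; ring.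
Qed.

Lemma radial Rad p cb : 0 < Rad -> dist2 p origin <= Rad ->
  exists q0, dist2 q0 origin = Rad /\ dist2 q0 cb - dist2 q0 origin <= dist2 p cb - dist2 p origin.
Proof.
  intros HR Hp. assert (G := dist2_ge0 p origin).
  destruct (Req_dec (dist2 p origin) 0) as [Z|Z].
  - exists (Rad, 0).
    assert (E : dist2 (Rad, 0) origin = Rad).
    { rewrite dist2_sq. apply sqrt_charac; [lra|]. unfold sq, origin; cbn [fst snd]. ring. }
    split; [exact E|]. rewrite E, Z.
    assert (T := dist2_tri (Rad, 0) p cb).
    assert (T2 := dist2_tri (Rad, 0) origin p). rewrite (dist2_sym origin p), E, Z in T2. lra.
  - assert (Pp : 0 < dist2 p origin) by lra.
    set (l := Rad / dist2 p origin).
    assert (Hl : 1 <= l).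
    { unfold l. apply (Rmult_le_reg_r (dist2 p origin)); [lra|]. unfold Rdiv.
      rewrite Rmult_assoc, Rinv_l by lra. lra. }
    exists (sc l p).
    assert (E : dist2 (sc l p) origin = Rad).
    { rewrite dist_sc0 by lra. unfold l. field. lra. }
    split; [exact E|]. rewrite E.
    assert (T := dist2_tri (sc l p) p cb). rewrite dist_sc1 in T by lra.
    assert (l * dist2 p origin = Rad) by (rewrite <- E; rewrite dist_sc0 by lra; reflexivity).
    nra.
Qed.

Lemma bd_circle Rad q : 0 < Rad -> dist2 q origin = Rad -> in_boundary (diskO Rad) q.
Proof.
  intros HR Hq e He. split.
  - exists q. split. unfold diskO; lra. rewrite dist2_self; lra.
  - set (s := e / (2 * Rad)). assert (Hs : 0 < s) by (unfold s; apply Rdiv_lt_0_compat; lra).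
    exists (sc (1 + s) q). split.
    + unfold diskO. rewrite dist_sc0 by lra. rewrite Hq. nra.
    + rewrite dist2_sym, dist_sc1 by lra. rewrite Hq.
      replace (1 + s - 1) with s by ring. unfold s. replace (e / (2 * Rad) * Rad) with (e / 2) by (field; lra). lra.
Qed.

Lemma bd_circle_conv Rad q : in_boundary (diskO Rad) q -> dist2 q origin = Rad.
Proof.
  intros H. assert (Hq := diskO_closed Rad q H). unfold diskO in Hq.
  destruct (Rle_lt_or_eq_dec _ _ Hq) as [Lt|Eq]; [|exact Eq]. exfalso.
  destruct (H (Rad - dist2 q origin) ltac:(lra)) as [_ [z [Hz Hd]]].
  apply Hz. unfold diskO. assert (T := dist2_tri z q origin). rewrite dist2_sym in Hd. lra.
Qed.


Section S.
Variables (n : nat) (c : nat -> pt) (rho : nat -> R).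

Definition samed i j k l := cij c i j = cij c k l /\ rhoij rho i j = rhoij rho k l.

Lemma same_delta i j k l x : samed i j k l -> delta c rho i j x = delta c rho k l x.
Proof. intros [E1 E2]. unfold delta. rewrite E1, E2. reflexivity. Qed.

Lemma not_distinct i j k l : ~ distinct_disks c rho i j k l -> samed i j k l.
Proof.
  intros H. unfold distinct_disks in H. apply not_or_and in H. destruct H as [H1 H2].
  split; apply NNPP; auto.
Qed.

Lemma two_cells Rad q i1 j1 i2 j2 : 0 < Rad -> dist2 q origin = Rad ->
  (i1 < n)%nat -> (j1 < n)%nat -> (i2 < n)%nat -> (j2 < n)%nat ->
  cell n c rho i1 j1 q -> cell n c rho i2 j2 q -> distinct_disks c rho i1 j1 i2 j2 ->
  Vset Rad n c rho i1 j1 q \/ Vset Rad n c rho i2 j2 q.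
Proof.
  intros HR Hq Hi1 Hj1 Hi2 Hj2 C1 C2 Hd.
  assert (E1 := cell_F n c rho i1 j1 q Hi1 Hj1 C1).
  assert (E2 := cell_F n c rho i2 j2 q Hi2 Hj2 C2).
  assert (Hne : cij c i1 j1 <> cij c i2 j2).
  { intros Heq. destruct Hd as [Hd|Hd]; [auto|]. apply Hd.
    unfold delta in E1, E2. rewrite Heq in E1. lra. }
  assert (Bq := bd_circle Rad q HR Hq).
  unfold delta in E1, E2.
  destruct (side_dir q (cij c i1 j1) (cij c i2 j2) Hne) as [[w [t0 [Hw [Ht0 H]]]]|[w [t0 [Hw [Ht0 H]]]]].
  - left. right. split; [|exact Bq].
    intros e He. split.
    + exists q. split; [exact C1|]. rewrite dist2_self; lra.
    + destruct (small_t (nw w) e t0 (nw_ge0 w) He Ht0) as [t [Ht Hte]].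
      exists (mv q w t). split.
      * intros Hc. specialize (Hc i2 j2 Hi2 Hj2). specialize (H t Ht).
        unfold delta in Hc. lra.
      * rewrite dist2_sym, dist_mv by lra. exact Hte.
  - right. right. split; [|exact Bq].
    intros e He. split.
    + exists q. split; [exact C2|]. rewrite dist2_self; lra.
    + destruct (small_t (nw w) e t0 (nw_ge0 w) He Ht0) as [t [Ht Hte]].
      exists (mv q w t). split.
      * intros Hc. specialize (Hc i1 j1 Hi1 Hj1). specialize (H t Ht).
        unfold delta in Hc. lra.
      * rewrite dist2_sym, dist_mv by lra. exact Hte.
Qed.

End S.


Section S.
Variables (n : nat) (c : nat -> pt) (rho : nat -> R).

Lemma samed_sym i j k l : samed c rho i j k l -> samed c rho k l i j.
Proof. intros [A B]; split; auto. Qed.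

Lemma pick_other i1 j1 p : (i1 < n)%nat -> (j1 < n)%nat ->
  apollonius_vertex n c rho p ->
  exists ib jb, (ib < n)%nat /\ (jb < n)%nat /\ cell n c rho ib jb p /\ distinct_disks c rho i1 j1 ib jb.
Proof.
  intros Hi Hj [a1 [b1 [a2 [b2 [a3 [b3 [H1 [H2 [H3 [H4 [H5 [H6 [D12 [D13 [D23 [C1 [C2 C3]]]]]]]]]]]]]]]]].
  destruct (classic (distinct_disks c rho i1 j1 a1 b1)) as [X|X].
  { exists a1, b1; auto. }
  destruct (classic (distinct_disks c rho i1 j1 a2 b2)) as [Y|Y].
  { exists a2, b2; auto. }
  exfalso. apply not_distinct in X. apply not_distinct in Y.
  destruct X as [X1 X2], Y as [Y1 Y2]. destruct D12 as [D|D]; apply D; congruence.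
Qed.

Lemma arc_case Rad i1 j1 i0 j0 p0 x0 : 0 < Rad -> (i1 < n)%nat -> (j1 < n)%nat ->
  cij c i1 j1 = origin -> dist2 x0 origin = Rad -> cell n c rho i1 j1 x0 ->
  (i0 < n)%nat -> (j0 < n)%nat -> Vset Rad n c rho i0 j0 p0 ->
  exists i j p, (i < n)%nat /\ (j < n)%nat /\ Vset Rad n c rho i j p /\
     delta c rho i j p = F n c rho x0.
Proof.
  intros HR Hi1 Hj1 Hca Hx0 Cx0 Hi0 Hj0 HV0.
  set (ra := rhoij rho i1 j1).
  assert (Hda : forall x, delta c rho i1 j1 x = dist2 x origin - ra).
  { intros x. unfold delta. rewrite Hca. reflexivity. }
  assert (Fx0 : F n c rho x0 = Rad - ra).
  { rewrite <- (cell_F n c rho i1 j1 x0 Hi1 Hj1 Cx0), Hda, Hx0. reflexivity. }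
  assert (Step1 : (exists i j p, (i < n)%nat /\ (j < n)%nat /\ Vset Rad n c rho i j p /\
     delta c rho i j p = F n c rho x0) \/
     exists ib jb p, (ib < n)%nat /\ (jb < n)%nat /\ diskO Rad p /\ cell n c rho ib jb p /\
       distinct_disks c rho i1 j1 ib jb).
  { destruct HV0 as [[Hav [Hc0 Hd0]]|[Hbc Hbo]].
    - right. destruct (pick_other i1 j1 p0 Hi1 Hj1 Hav) as [ib [jb [Hib [Hjb [Cb Db]]]]].
      exists ib, jb, p0. auto.
    - assert (Cp0 := cell_closed n c rho i0 j0 p0 Hbc).
      assert (Rp0 := bd_circle_conv Rad p0 Hbo).
      destruct (classic (distinct_disks c rho i1 j1 i0 j0)) as [X|X].
      + right. exists i0, j0, p0. repeat split; auto. unfold diskO; lra.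
      + left. exists i0, j0, p0. split; [auto|split; [auto|split]].
        * right; auto.
        * apply not_distinct in X. rewrite <- (same_delta c rho i1 j1 i0 j0 p0 X), Hda, Rp0, Fx0. reflexivity. }
  destruct Step1 as [Done|[ib [jb [p [Hib [Hjb [Hp [Cbp Dab]]]]]]]]; [exact Done|].
  set (cb := cij c ib jb). set (rb := rhoij rho ib jb).
  assert (Hdb : forall x, delta c rho ib jb x = dist2 x cb - rb) by (intros; reflexivity).
  destruct (radial Rad p cb HR Hp) as [q0 [Hq0 Hrad]].
  assert (Hbp : delta c rho ib jb p <= delta c rho i1 j1 p) by (apply Cbp; auto).
  assert (Hq0b : delta c rho ib jb q0 <= delta c rho i1 j1 q0).
  { rewrite Hdb, Hda in *. lra. }
  assert (Fq0 := F_le n c rho q0 i1 j1 Hi1 Hj1).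
  destruct (Rle_lt_or_eq_dec _ _ Fq0) as [Lt|Eq].
  2:{ assert (Ca : cell n c rho i1 j1 q0) by (apply F_cell; lra).
      assert (Cb : cell n c rho ib jb q0) by (apply F_cell; lra).
      destruct (two_cells n c rho Rad q0 i1 j1 ib jb HR Hq0 Hi1 Hj1 Hib Hjb Ca Cb Dab) as [V|V].
      - exists i1, j1, q0. repeat split; auto. rewrite Hda, Hq0, Fx0. reflexivity.
      - exists ib, jb, q0. repeat split; auto.
        rewrite (cell_F n c rho ib jb q0 Hib Hjb Cb), Eq, Hda, Hq0, Fx0. reflexivity. }
  assert (Sx0 : 0 < sq x0 origin) by (rewrite <- dist2_sqr, Hx0; nra).
  assert (Sq0 : sq q0 origin = sq x0 origin) by (rewrite <- !dist2_sqr, Hx0, Hq0; reflexivity).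
  destruct (cp_reach x0 q0 Sx0 Sq0) as [th1 Hth1].
  set (P := fun t => cp x0 (t * th1)).
  set (phi := fun t => F n c rho (P t) - delta c rho i1 j1 (P t)).
  set (L := 2 * (Rabs th1 * nw x0)).
  assert (HPl : forall s t, dist2 (P s) (P t) <= Rabs th1 * nw x0 * Rabs (s - t)).
  { intros s t. unfold P. eapply Rle_trans. apply cp_lip.
    replace (s * th1 - t * th1) with ((s - t) * th1) by ring. rewrite Rabs_mult.
    apply Req_le; ring. }
  assert (HL : 0 <= L) by (unfold L; assert (0 <= Rabs th1 * nw x0) by (apply Rmult_le_pos; [apply Rabs_pos|apply nw_ge0]); lra).
  assert (Hlip : forall s t, 0 <= s <= 1 -> 0 <= t <= 1 -> Rabs (phi s - phi t) <= L * Rabs (s - t)).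
  { intros s t _ _. unfold phi.
    assert (A1 := F_lip n c rho (P s) (P t)). assert (A2 := delta_lip c rho i1 j1 (P s) (P t)).
    assert (A3 := HPl s t).
    apply abs_le_iff in A1. apply abs_le_iff in A2. apply abs_le_iff. unfold L. lra. }
  assert (Ph0 : phi 0 = 0).
  { unfold phi, P. rewrite Rmult_0_l, cp_0. rewrite (cell_F n c rho i1 j1 x0 Hi1 Hj1 Cx0). ring. }
  assert (Ph1 : phi 1 < 0).
  { unfold phi, P. rewrite Rmult_1_l, Hth1. lra. }
  assert (Phle : forall t, 0 <= t <= 1 -> phi t <= 0).
  { intros t _. unfold phi. assert (A := F_le n c rho (P t) i1 j1 Hi1 Hj1). lra. }
  destruct (sup_arg phi L HL Hlip Ph0 Ph1 Phle) as [ts [Hts [Z Hnear]]].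
  set (q := P ts).
  assert (Hq : dist2 q origin = Rad).
  { rewrite <- Hx0. apply dist2_eq. unfold q, P. apply cp_norm. }
  assert (Cq : cell n c rho i1 j1 q).
  { apply F_cell. unfold phi in Z. fold q in Z. lra. }
  exists i1, j1, q. split; [auto|split; [auto|split]].
  - right. split; [|apply bd_circle; auto].
    intros e He. split.
    + exists q. split; [exact Cq|]. rewrite dist2_self. lra.
    + set (K := Rabs th1 * nw x0).
      assert (HK : 0 <= K) by (unfold K; apply Rmult_le_pos; [apply Rabs_pos|apply nw_ge0]).
      destruct (Hnear (e / (K + 1))) as [t [Ht01 [Htd Hneg]]].
      { apply Rdiv_lt_0_compat; lra. }
      exists (P t). split.
      * intros Cz. assert (Ez := cell_F n c rho i1 j1 (P t) Hi1 Hj1 Cz). unfold phi in Hneg. lra.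
      * unfold q. eapply Rle_lt_trans. apply HPl. fold K.
        rewrite Rabs_minus_sym.
        assert (K * Rabs (t - ts) <= K * (e / (K + 1))) by (apply Rmult_le_compat_l; lra).
        assert (K * (e / (K + 1)) < e).
        { apply (Rmult_lt_reg_r (K + 1)); [lra|]. unfold Rdiv.
          replace (K * (e * / (K + 1)) * (K + 1)) with (K * e * ((K + 1) * / (K + 1))) by ring.
          rewrite Rinv_r by lra. nra. }
        lra.
  - rewrite Hda, Hq, Fx0. reflexivity.
Qed.

End S.


Section S.
Variables (n : nat) (c : nat -> pt) (rho : nat -> R).

Lemma core Rad x0 i1 j1 i2 j2 i0 j0 p0 : 0 < Rad -> diskO Rad x0 ->
  (forall x, diskO Rad x -> F n c rho x <= F n c rho x0) ->
  (i1 < n)%nat -> (j1 < n)%nat -> (i2 < n)%nat -> (j2 < n)%nat ->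
  cell n c rho i1 j1 x0 -> cell n c rho i2 j2 x0 ->
  (forall k l, (k < n)%nat -> (l < n)%nat -> cell n c rho k l x0 ->
      samed c rho k l i1 j1 \/ samed c rho k l i2 j2) ->
  distinct_disks c rho i1 j1 i2 j2 \/ (i2 = i1 /\ j2 = j1) ->
  (i0 < n)%nat -> (j0 < n)%nat -> Vset Rad n c rho i0 j0 p0 ->
  exists i j p, (i < n)%nat /\ (j < n)%nat /\ Vset Rad n c rho i j p /\
     delta c rho i j p = F n c rho x0.
Proof.
  intros HR Hx0 Hmax Hi1 Hj1 Hi2 Hj2 Ca Cb Hab Hdis Hi0 Hj0 HV0.
  assert (Hn : (0 < n)%nat) by lia.
  set (M := F n c rho x0).
  assert (Ea := cell_F n c rho i1 j1 x0 Hi1 Hj1 Ca).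
  assert (Eb := cell_F n c rho i2 j2 x0 Hi2 Hj2 Cb).
  destruct (fin_gap (fun k l => delta c rho k l x0 - M) n) as [g [Hg Hgap]].
  assert (Local : forall y, diskO Rad y -> dist2 x0 y < g ->
     M < delta c rho i1 j1 y -> M < delta c rho i2 j2 y -> False).
  { intros y Hy Hd Ha Hb.
    destruct (F_att n c rho y Hn) as [k [l [Hk [Hl Ey]]]].
    assert (Fy := Hmax y Hy). fold M in Fy.
    destruct (classic (cell n c rho k l x0)) as [Ck|Ck].
    - destruct (Hab k l Hk Hl Ck) as [S|S]; rewrite (same_delta c rho k l _ _ y S) in Ey; lra.
    - assert (Lt : M < delta c rho k l x0).
      { apply Rnot_le_lt. intros Hle. apply Ck. apply F_cell.
        assert (A := F_le n c rho x0 k l Hk Hl). fold M in A |- *. lra. }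
      assert (G := Hgap k l Hk Hl ltac:(cbv beta; lra)). cbv beta in G.
      assert (L := delta_lip c rho k l x0 y). apply abs_le_iff in L. lra. }
  unfold diskO in Hx0.
  destruct (Rle_lt_or_eq_dec _ _ Hx0) as [Int|Circ].
  - exfalso.
    destruct (inc_dir x0 (cij c i1 j1) (cij c i2 j2)) as [w [Hw Hinc]].
    set (m := Rmin g (Rad - dist2 x0 origin)).
    assert (Hm : 0 < m) by (apply Rmin_glb_lt; lra).
    destruct (small_t (nw w) m 1 (nw_ge0 w) Hm ltac:(lra)) as [t [Ht Htm]].
    assert (M1 := Rmin_l g (Rad - dist2 x0 origin)). assert (M2 := Rmin_r g (Rad - dist2 x0 origin)).
    fold m in M1, M2.
    assert (D : dist2 x0 (mv x0 w t) = t * nw w) by (rewrite dist2_sym; apply dist_mv; lra).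
    destruct (Hinc t ltac:(lra)) as [I1 I2].
    apply (Local (mv x0 w t)).
    + unfold diskO. assert (T := dist2_tri (mv x0 w t) x0 origin). rewrite dist2_sym in D. lra.
    + lra.
    + unfold delta. apply dist2_lt in I1. unfold delta in Ea. fold M in Ea. lra.
    + unfold delta. apply dist2_lt in I2. unfold delta in Eb. fold M in Eb. lra.
  - destruct Hdis as [Dis|[E1 E2]].
    + destruct (two_cells n c rho Rad x0 i1 j1 i2 j2 HR Circ Hi1 Hj1 Hi2 Hj2 Ca Cb Dis) as [V|V].
      * exists i1, j1, x0. auto.
      * exists i2, j2, x0. auto.
    + subst i2 j2.
      destruct (classic (cij c i1 j1 = origin)) as [Z|NZ].
      * exact (arc_case n c rho Rad i1 j1 i0 j0 p0 x0 HR Hi1 Hj1 Z Circ Ca Hi0 Hj0 HV0).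
      * exfalso.
        assert (NC : ~ cell n c rho j1 i1 x0).
        { intros Cj. destruct (Hab j1 i1 Hj1 Hi1 Cj) as [[S _]|[S _]]; apply NZ;
          unfold cij, origin in *; injection S; intros; f_equal; lra. }
        assert (Lt : M < delta c rho j1 i1 x0).
        { apply Rnot_le_lt. intros Hle. apply NC. apply F_cell. fold M. lra. }
        assert (Rr : rhoij rho j1 i1 = rhoij rho i1 j1) by (unfold rhoij; ring).
        unfold delta in Lt, Ea. rewrite Rr in Lt. fold M in Ea.
        assert (Dl : dist2 x0 (cij c i1 j1) < dist2 x0 (cij c j1 i1)) by lra.
        assert (Sl : sq x0 (cij c i1 j1) < sq x0 (cij c j1 i1)).
        { apply Rnot_le_lt. intros Hs. apply dist2_le in Hs. lra. }
        assert (Pos : 0 < fst x0 * fst (cij c i1 j1) + snd x0 * snd (cij c i1 j1)).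
        { unfold sq, cij in Sl |- *. cbn [fst snd] in *. nra. }
        destruct (rot_away x0 (cij c i1 j1) g Hg Pos) as [y [Yn [Ys Yd]]].
        apply (Local y).
        -- unfold diskO. rewrite <- Circ. apply Req_le. apply dist2_eq. exact Yn.
        -- exact Yd.
        -- unfold delta. apply dist2_lt in Ys. lra.
        -- unfold delta. apply dist2_lt in Ys. lra.
Qed.

End S.

From Stdlib Require Import Reals Lra Psatz Classical.
From mathcomp Require all_boot all_order all_algebra all_classical all_reals topology normedtype derive Rstruct Rstruct_topology.
Open Scope R_scope.
Module MC.
Import all_boot all_order all_algebra all_classical all_reals topology normedtype derive Rstruct Rstruct_topology.
Import Order.TTheory GRing.Theory Num.Theory.
Import numFieldNormedType.Exports.
Local Open Scope classical_set_scope.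

Lemma lip_cont (g : pt -> R) :
  (forall x y, Rle (Rabs (g x - g y)) (dist2 x y)) -> continuous (g : (R * R)%type -> R).
Proof.
move=> Hg x. 
apply: (proj2 (@pseudometric_normed_Zmodule.cvgrPdist_lt R R^o _ (nbhs x) _ g (g x))) => e e0.
exists (ball x.1 (e/2), ball x.2 (e/2)).
  by split; apply: nbhsx_ballx; rewrite divr_gt0.
case: x => a b; case=> c d [] /= H1 H2.
rewrite /ball /= in H1 H2.
move/RltP: H1 => H1; move/RltP: H2 => H2; move/RltP: e0 => e0.
apply/RltP.
have := Hg (a,b) (c,d); have := dist2_le_sum (a,b) (c,d).
have nE : forall z : R, `|z|%R = Rabs z by [].
rewrite !nE in H1 H2 *. rewrite -(INRE 2) /= in H1 H2.
simpl in *. rewrite -?RminusE -?RdivE -?RplusE -?R0E -?R1E in H1 H2 e0 *. lra.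
Qed.

Lemma max_exists (g : pt -> R) (Rad : R) : Rlt 0 Rad ->
  (forall x y, Rle (Rabs (g x - g y)) (dist2 x y)) ->
  exists x0, diskO Rad x0 /\ forall x, diskO Rad x -> Rle (g x) (g x0).
Proof.
move=> HR Hg.
pose A : set (R * R)%type := [set x | diskO Rad x].
have [|||x0 Ax0 Hx0] := @compact_EVT_max _ R g A.
- exists origin; rewrite /A /=; exact: origin_in.
- apply: (@subclosed_compact _ A (`[(- Rad)%R, Rad] `*` `[(- Rad)%R, Rad])).
  + have -> : A = (fun x => dist2 x origin) @^-1` [set r | (r <= Rad)%R].
      rewrite /A; apply/seteqP; split => x /=; rewrite /diskO.
        by move=> H; apply/RleP.
      by move/RleP.
    apply: (proj1 (continuous_closedP _)); last exact: closed_le.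
    apply: lip_cont; exact: dist_lip.
  + apply: compact_setX; exact: segment_compact.
  + move=> x; rewrite /A /= /diskO => H.
    have [H1 H2] := coord_le x.
    split; rewrite /= in_itv /=; apply/andP; split; apply/RleP;
      rewrite -?RoppE; lra.
- apply: continuous_subspaceT; exact: lip_cont.
- exists x0; split; first by move: Ax0; rewrite inE.
  move=> x Hx; apply/RleP; apply: Hx0; rewrite inE; exact: Hx.
Qed.
End MC.

Theorem lemma11 (Rad : R) (n : nat) (c : nat -> pt) (rho : nat -> R)
  (hRad : 0 < Rad)
  (hrho : forall i, (i < n)%nat -> 0 <= rho i <= Rad / 2)
  (hV : exists i j p, (i < n)%nat /\ (j < n)%nat /\ Vset Rad n c rho i j p) :
  exists astar,
    is_min_cover Rad n c rho astar /\
    (exists i j p, (i < n)%nat /\ (j < n)%nat /\ Vset Rad n c rho i j p /\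
                   delta c rho i j p = astar) /\
    (forall i j p, (i < n)%nat -> (j < n)%nat -> Vset Rad n c rho i j p ->
                   delta c rho i j p <= astar).
Proof.
  destruct hV as [i0 [j0 [p0 [Hi0 [Hj0 HV0]]]]].
  assert (Hn : (0 < n)%nat) by lia.
  destruct (MC.max_exists (F n c rho) Rad hRad (F_lip n c rho)) as [x0 [Hx0 Hmax]].
  exists (F n c rho x0). split; [|split].
  - split.
    + intros x Hx. destruct (F_att n c rho x Hn) as [k [l [Hk [Hl E]]]].
      exists k, l. split; [auto|split; [auto|]]. assert (A := Hmax x Hx).
      unfold delta in E. lra.
    + intros b Hb. destruct (Hb x0 Hx0) as [k [l [Hk [Hl Hd]]]].
      assert (A := F_le n c rho x0 k l Hk Hl). unfold delta in A. lra.
  - destruct (F_att n c rho x0 Hn) as [i1 [j1 [Hi1 [Hj1 E]]]].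
    assert (Ca : cell n c rho i1 j1 x0) by (apply F_cell; lra).
    destruct (classic (exists i2 j2, (i2 < n)%nat /\ (j2 < n)%nat /\ cell n c rho i2 j2 x0 /\
                 distinct_disks c rho i1 j1 i2 j2)) as [[i2 [j2 [Hi2 [Hj2 [Cb Dab]]]]]|No2].
    + destruct (classic (exists i3 j3, (i3 < n)%nat /\ (j3 < n)%nat /\ cell n c rho i3 j3 x0 /\
                 distinct_disks c rho i1 j1 i3 j3 /\ distinct_disks c rho i2 j2 i3 j3))
        as [[i3 [j3 [Hi3 [Hj3 [Cc [D13 D23]]]]]]|No3].
      * exists i1, j1, x0. split; [auto|split; [auto|split]].
        -- left. split; [|split; auto].
           exists i1, j1, i2, j2, i3, j3. repeat split; auto.
        -- lra.
      * apply (core n c rho Rad x0 i1 j1 i2 j2 i0 j0 p0); auto.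
        intros k l Hk Hl Ck.
        destruct (classic (distinct_disks c rho i1 j1 k l)) as [X|X].
        -- destruct (classic (distinct_disks c rho i2 j2 k l)) as [Y|Y].
           ++ exfalso. apply No3. exists k, l. auto.
           ++ right. apply samed_sym. apply not_distinct. exact Y.
        -- left. apply samed_sym. apply not_distinct. exact X.
    + apply (core n c rho Rad x0 i1 j1 i1 j1 i0 j0 p0); auto.
      intros k l Hk Hl Ck.
      destruct (classic (distinct_disks c rho i1 j1 k l)) as [X|X].
      * exfalso. apply No2. exists k, l. auto.
      * left. apply samed_sym. apply not_distinct. exact X.
  - intros i j p Hi Hj HV.
    assert (Cp : cell n c rho i j p /\ diskO Rad p).
    { destruct HV as [[_ [C D]]|[C D]]; split; auto.
      apply cell_closed; auto. apply diskO_closed; auto. }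
    destruct Cp as [Cp Dp].
    rewrite (cell_F n c rho i j p Hi Hj Cp). apply Hmax. exact Dp.
Qed.
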